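(* Let $n\geq 2$. Let $H$ be the $n!\times(n-1)^2$ $0/1$ matrix with rows indexed by $S(n)$, columns indexed by ordered pairs $(i,j)$ with $i,j\in\{1,\dots,n-1\}$, and $(\pi,(i,j))$-entry equal to $1$ iff $\pi(i)=j$. Let $N$ be the submatrix of $H$ formed by the rows indexed by derangements of $\{1,\dots,n\}$, and let $W$ be the submatrix of $H$ formed by the columns indexed by the pairs $(i,i)$, $i\in\{1,\dots,n-1\}$. If $y\in\mathbb{R}^{(n-1)^2}$ satisfies $Ny=0$, then $Hy$ lies in the column space of $W$.
   Context: A derangement of $\{1,\dots,n\}$ is a permutation with no fixed points; $S(n)$ is the symmetric group on $\{1,\dots,n\}$. *)

(* Defs.v *)
From HB Require Import structures.
From mathcomp Require Import all_boot all_order all_algebra all_fingroup.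
Set Implicit Arguments. Unset Strict Implicit. Unset Printing Implicit Defensive.
Import GRing.Theory Num.Theory.
Local Open Scope ring_scope.

(* Points 1..n of the paper are the elements 0..n-1 of 'I_n; the subset
   {1,..,n-1} is 'I_n.-1, embedded in 'I_n by widen_ord. *)
Definition emb (n : nat) (i : 'I_n.-1) : 'I_n := widen_ord (leq_pred n) i.

Definition derangement (n : nat) (s : {perm 'I_n}) : bool := [forall i, s i != i].
Definition derangements (n : nat) : {set {perm 'I_n}} := [set s | derangement s].

Definition Hmx (R : nzRingType) (n : nat)
  : 'M[R]_(#|{: {perm 'I_n}}|, #|{: 'I_n.-1 * 'I_n.-1}|) :=
  \matrix_(r, c)
    ((enum_val r : {perm 'I_n}) (emb (enum_val c).1) == emb (enum_val c).2)%:R.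

Definition Nmx (R : nzRingType) (n : nat)
  : 'M[R]_(#|derangements n|, #|{: 'I_n.-1 * 'I_n.-1}|) :=
  \matrix_(r, c) Hmx R n (enum_rank (enum_val r : {perm 'I_n})) c.

Definition Wmx (R : nzRingType) (n : nat)
  : 'M[R]_(#|{: {perm 'I_n}}|, n.-1) :=
  \matrix_(r, k) Hmx R n r (enum_rank (k, k)).

(* Main.v *)
Require Import Defs.
From HB Require Import structures.
From mathcomp Require Import all_boot all_order all_algebra all_fingroup.
Import GRing.Theory Num.Theory.
Local Open Scope ring_scope.

Lemma next_neq (T : eqType) (p : seq T) x :
  uniq p -> (1 < size p)%N -> x \in p -> next p x != x.
Proof.
move=> Up sp xp; rewrite next_nth xp.
case: p Up sp xp => [//|y0 p'] Up sp xp.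
set i := index x (y0 :: p').
have ilt : (i < size (y0 :: p'))%N by rewrite index_mem.
have Ex : nth y0 (y0 :: p') i = x by rewrite nth_index.
rewrite -[X in _ != X]Ex.
case: (ltnP i (size p')) => hi.
  have -> : nth y0 p' i = nth y0 (y0 :: p') i.+1 by [].
  by rewrite nth_uniq //= ?ltnS // eqn_leq ltnn.
rewrite nth_default //.
have -> : y0 = nth y0 (y0 :: p') 0 by [].
rewrite nth_uniq //; apply/eqP => i0; move: hi; rewrite -i0.
by move: sp => /=; case: (size p').
Qed.

Definition Fs (R : nzRingType) (T : finType) (Y : T -> T -> R) (s : {perm T}) :=
  \sum_k Y k (s k).
Arguments Fs {R T}.

Lemma split2 (R : nzRingType) (T : finType) (Y : T -> T -> R) (s : {perm T}) a b :
  a != b -> Fs Y s = Y a (s a) + Y b (s b) + \sum_(k | (k != a) && (k != b)) Y k (s k).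
Proof.
move=> ab; rewrite /Fs (bigD1 a) //= (bigD1 b) /=; last by rewrite eq_sym.
by rewrite addrA.
Qed.
Arguments split2 {R T}.

Lemma exists_der (T : finType) (l : seq T) : uniq l -> (1 < size l)%N ->
  exists s : {perm T}, [forall i, s i != i] /\
     s =1 next (l ++ [seq k <- enum T | k \notin l]).
Proof.
move=> Ul sl; set p := l ++ _.
have Up : uniq p.
  rewrite cat_uniq Ul filter_uniq ?enum_uniq // andbT /=.
  by apply/hasPn => k; rewrite mem_filter => /andP[].
have inj : injective (next p) := can_inj (prev_next Up).
have memp k : k \in p by rewrite mem_cat mem_filter mem_enum andbT orbN.
exists (perm inj); split; last exact: permE.
apply/forallP => k; rewrite permE next_neq //.
by rewrite size_cat (leq_trans sl) // leq_addr.
Qed.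

Lemma key (R : nzRingType) (T : finType) (Y : T -> T -> R)
  (HD : forall s : {perm T}, [forall i, s i != i] -> Fs Y s = 0) x y u v :
  x != y -> x != u -> x != v -> y != u -> y != v -> u != v ->
  Y x y + Y u v = Y x v + Y u y.
Proof.
move=> xy xu xv yu yv uv.
have Ul : uniq [:: x; y; u; v].
  by rewrite /= !inE !negb_or xy xu xv yu yv uv.
have [s [ds Es]] := @exists_der T _ Ul isT.
have sx : s x = y by rewrite Es /= eqxx.
have su : s u = v.
  rewrite Es /= ; move: xu yu; rewrite ![u == _]eq_sym => /negbTE -> /negbTE ->; by rewrite eqxx.
set s' := (tperm x u * s)%g.
have s'x : s' x = v by rewrite permM tpermL.
have s'u : s' u = y by rewrite permM tpermR.
have ds' : [forall i, s' i != i].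
  apply/forallP => k.
  case: (eqVneq k x) => [->|kx]; first by rewrite s'x eq_sym.
  case: (eqVneq k u) => [->|ku]; first by rewrite s'u.
  by rewrite permM tpermD; [exact: (forallP ds) | rewrite eq_sym | rewrite eq_sym].
have E1 := HD _ ds; have E2 := HD _ ds'.
rewrite (split2 Y s x u xu) sx su in E1.
rewrite (split2 Y s' x u xu) s'x s'u in E2.
have ES : \sum_(k | (k != x) && (k != u)) Y k (s' k) =
          \sum_(k | (k != x) && (k != u)) Y k (s k).
  apply: eq_bigr => k /andP[kx ku]; rewrite permM tpermD // eq_sym //.
rewrite ES in E2.
apply: (addIr (\sum_(k | (k != x) && (k != u)) Y k (s k))).
by rewrite E1 E2.
Qed.
Arguments key {R T Y} HD {x y u v}.

Lemma core (R : numDomainType) (T : finType) (L : T) (Y : T -> T -> R)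
  (HL1 : forall l, Y L l = 0) (HL2 : forall k, Y k L = 0)
  (HD : forall s : {perm T}, [forall i, s i != i] -> Fs Y s = 0) p q :
  p != q -> p != L -> q != L -> Y p q = 0.
Proof.
move=> pq pL qL.
have Rw x y v : x != y -> x != v -> y != v -> x != L -> y != L -> v != L ->
    Y x y = Y x v.
  move=> xy xv yv xL yL vL.
  have Lv : L != v by rewrite eq_sym.
  have := key HD xy xL xv yL yv Lv.
  by rewrite !HL1 !addr0.
have Cl x y u : x != y -> x != u -> y != u -> x != L -> y != L -> u != L ->
    Y x y = Y u y.
  move=> xy xu yu xL yL uL.
  have := key HD xy xu xL yu yL uL.
  by rewrite !HL2 addr0 add0r.
have U3 : uniq [:: p; q; L] by rewrite /= !inE !negb_or pq pL qL.
have h3 : (3 <= #|T|)%N.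
  move/card_uniqP: U3 => c3; rewrite -[3%N]/(size [:: p; q; L]) -c3; exact: max_card.
have cnt (s : {perm T}) : [forall i, s i != i] ->
    Fs Y s = \sum_(k in [set k | (k != L) && (s k != L)]) Y k (s k) /\
    #|[set k | (k != L) && (s k != L)]| = (#|T| - 2)%N.
  move=> ds; split.
    rewrite /Fs [RHS]big_mkcond /=; apply: eq_bigr => k _; rewrite inE.
    case: (eqVneq k L) => [->|kL]; first by rewrite HL1.
    by case: (eqVneq (s k) L) => [->|skL]; first by rewrite HL2.
  have := cardsC [set k | (k != L) && (s k != L)].
  have -> : ~: [set k | (k != L) && (s k != L)] = [set L; (s^-1)%g L].
    by apply/setP => k; rewrite !inE negb_and !negbK (canF_eq (permK s)).
  rewrite cards2.
  have -> : (L != (s^-1)%g L).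
    apply/eqP=> E; have := forallP ds L; by rewrite {1}E permKV eqxx.
  by move=> <-; rewrite addnK.
case: (ltnP 3 #|T|) => h4.
  have oth a b : exists e, (e != a) && (e != b) && (e != L).
    case: (pickP [pred e | (e != a) && (e != b) && (e != L)]) => [e He|H].
      by exists e.
    have : (#|T| <= 3)%N.
      apply: leq_trans (card_size [:: a; b; L]).
      apply/subset_leq_card/subsetP => k _.
      move: (H k) => /=; rewrite !inE.
      by case: (k == a); case: (k == b); case: (k == L).
    by rewrite leqNgt h4.
  have E a b c d : a != b -> c != d -> a != L -> b != L -> c != L -> d != L ->
      Y a b = Y c d.
    move=> ab cd aL bL cL dL.
    case: (eqVneq d a) => [da|da].
      subst d.
      case: (eqVneq b c) => [bc|bc].
        subst c.
        have [e /andP[/andP[ea eb] eL]] := oth a b.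
        rewrite (Cl a b e) // 1?eq_sym //.
        rewrite (Rw e b a) // 1?eq_sym //.
        by rewrite (Cl e a b) // 1?eq_sym.
      rewrite (Cl a b c) // 1?eq_sym //.
      by rewrite (Rw c b a) // 1?eq_sym.
    have -> : Y a b = Y a d.
      case: (eqVneq b d) => [->//|bd].
      by rewrite (Rw a b d) // eq_sym.
    case: (eqVneq c a) => [->//|ca].
    by rewrite (Cl a d c) // eq_sym.
  have Upq : uniq [:: p; q] by rewrite /= inE pq.
  have [s [ds _]] := @exists_der T [:: p; q] Upq isT.
  have [c1 c2] := cnt s ds.
  have E2 : \sum_(k in [set k | (k != L) && (s k != L)]) Y k (s k) =
            \sum_(k in [set k | (k != L) && (s k != L)]) Y p q.
    apply: eq_bigr => k; rewrite inE => /andP[kL skL]; apply: E => //.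
    by rewrite eq_sym (forallP ds k).
  have := HD s ds; rewrite c1 E2 sumr_const c2 => /eqP; rewrite mulrn_eq0.
  case/orP => [|/eqP //].
  by rewrite subn_eq0 leqNgt (ltnW h4).
have T3 : #|T| = 3%N by apply/eqP; rewrite eqn_leq h4 h3.
have [s [ds Es]] := @exists_der T [:: p; q; L] U3 isT.
have sp : s p = q by rewrite Es /= eqxx.
have sq : s q = L by rewrite Es /= eq_sym (negbTE pq) eqxx.
have [c1 c2] := cnt s ds.
have : #|[set k | (k != L) && (s k != L)]| == 1%N by rewrite c2 T3.
move/cards1P => [z Az].
have pA : p \in [set k | (k != L) && (s k != L)] by rewrite inE pL sp qL.
rewrite Az inE in pA; move/eqP: pA => pz; subst z.
by have := HD s ds; rewrite c1 Az big_set1 sp.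
Qed.

Theorem lemma11 (R : realFieldType) (n : nat) (hn : (2 <= n)%N)
  (y : 'cV[R]_(#|{: 'I_n.-1 * 'I_n.-1}|)) :
  Nmx R n *m y = 0 -> exists z : 'cV[R]_(n.-1), Hmx R n *m y = Wmx R n *m z.
Proof.
case: n hn y => [//|m] hm y Hy.
pose e := @emb m.+1 : 'I_m -> 'I_m.+1.
pose L := (ord_max : 'I_m.+1).
pose f (c : 'I_m * 'I_m) := y (enum_rank c) 0.
pose Y (k l : 'I_m.+1) :=
  \sum_(c : 'I_m * 'I_m) ((k == e c.1) && (l == e c.2))%:R * f c.
have einj : injective e.
  by move=> i j /(congr1 val) /= /val_inj.
have eL i : e i != L by rewrite -val_eqE /= neq_ltn ltn_ord.
have HL1 l : Y L l = 0.
  by apply: big1 => c _; rewrite eq_sym (negbTE (eL _)) mul0r.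
have HL2 k : Y k L = 0.
  by apply: big1 => c _; rewrite [L == _]eq_sym (negbTE (eL _)) andbF mul0r.
have Ye a b : Y (e a) (e b) = f (a, b).
  rewrite /Y (bigD1 (a, b)) //= !eqxx mul1r big1 ?addr0 // => -[c1 c2] /= ne.
  rewrite !(inj_eq einj).
  by rewrite -[_ && _]/((a, b) == (c1, c2)) eq_sym (negbTE ne) mul0r.
pose G (s : {perm 'I_m.+1}) := \sum_(c : 'I_m * 'I_m) (s (e c.1) == e c.2)%:R * f c.
have FG s : Fs Y s = G s.
  rewrite /Fs /Y exchange_big; apply: eq_bigr => c _.
  rewrite (bigD1 (e c.1)) //= eqxx /= big1 ?addr0 // => k kne.
  by rewrite (negbTE kne) mul0r.
have rowH r : (Hmx R m.+1 *m y) r 0 = G (enum_val r).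
  rewrite mxE (reindex (@enum_rank _)) /=; last by apply: onW_bij; exact: enum_rank_bij.
  by apply: eq_bigr => c _; rewrite mxE enum_rankK.
have HD (s : {perm 'I_m.+1}) : [forall i, s i != i] -> Fs Y s = 0.
  move=> ds; have sin : s \in derangements m.+1 by rewrite inE.
  move/matrixP: (Hy) => /(_ (enum_rank_in sin s) 0).
  rewrite [RHS]mxE FG => <-.
  rewrite -[s in G s]enum_rankK -rowH !mxE; apply: eq_bigr => c _.
  by rewrite !mxE !enum_rankK enum_rankK_in.
have off i j : i != j -> f (i, j) = 0.
  move=> ij; rewrite -Ye; apply: (@core _ _ L Y HL1 HL2 HD);
    [apply/eqP => /einj /eqP; by rewrite (negbTE ij) | exact: eL | exact: eL].
exists (\col_k f (k, k)).
apply/matrixP => r j; rewrite ord1 rowH mxE.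
have -> : G (enum_val r) = \sum_a \sum_b
    (enum_val r (e (a, b).1) == e (a, b).2)%:R * f (a, b).
  by rewrite pair_bigA; apply: eq_bigr => -[a b].
apply: eq_bigr => i _; rewrite (bigD1 i) //= big1 ?addr0.
  by rewrite !mxE enum_rankK.
by move=> k ki; rewrite off ?mulr0 // eq_sym.
Qed.
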